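(* Let $k>\ell\ge1$, $m\ge1$ and $w=a^kba^\ell b^m$, and let $u\in L^{\epsilon}_{\vdash_{\{w\}}}$. If $a^\alpha b$ is a prefix of $u$ then $\alpha\ge k$; if $a^\alpha b^2$ is a prefix of $u$ then $\alpha\ge 2k$.
   Context: For words $u,v$, the shuffle $u \sqcup\!\sqcup v$ is the set of all words $u_1v_1\cdots u_kv_k$ with $k\ge 1$, $u=u_1\cdots u_k$, $v=v_1\cdots v_k$ (pieces possibly empty). For a finite set $I$ of words, $v \vdash_I w$ means $w \in v \sqcup\!\sqcup u$ for some $u\in I$; $\vdash_I^*$ is its reflexive-transitive closure and $L^{\epsilon}_{\vdash_I}=\{w : \epsilon \vdash_I^* w\}$. *)

(* Defs.v *)
From mathcomp Require Import all_boot.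
From Stdlib Require Import Relations.
Set Implicit Arguments. Unset Strict Implicit. Unset Printing Implicit Defensive.

Section Defs.
Variable T : eqType.

(* w is in the shuffle of u and v: w = u_1 v_1 ... u_k v_k with k >= 1,
   u = u_1...u_k, v = v_1...v_k (pieces possibly empty). *)
Definition in_shuffle (u v w : seq T) : Prop :=
  exists ps : seq (seq T * seq T),
    0 < size ps /\
    u = flatten (map fst ps) /\
    v = flatten (map snd ps) /\
    w = flatten (map (fun p => p.1 ++ p.2) ps).

Definition derive_step (I : seq (seq T)) (v w : seq T) : Prop :=
  exists2 u, u \in I & in_shuffle v u w.

Definition L_eps (I : seq (seq T)) (w : seq T) : Prop :=
  clos_refl_trans (seq T) (derive_step I) [::] w.

Definition is_prefix (p u : seq T) : Prop := exists s, u = p ++ s.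
End Defs.

(* Main.v *)
From Stdlib Require Import Relations Lia.
Require Import Defs.
From mathcomp Require Import all_boot zify.

Set Implicit Arguments.
Section S.
Variable T : eqType.

Inductive sh : seq T -> seq T -> seq T -> Prop :=
| sh_nil : sh [::] [::] [::]
| sh_l c x y z : sh x y z -> sh (c :: x) y (c :: z)
| sh_r c x y z : sh x y z -> sh x (c :: y) (c :: z).

Lemma sh_app p1 p2 x y z : sh x y z -> sh (p1 ++ x) (p2 ++ y) (p1 ++ p2 ++ z).
Proof.
move=> H; elim: p1 => [|c p1 IH] /=; last by apply: sh_l.
elim: p2 => [|c p2 IH] //=; by apply: sh_r.
Qed.

Lemma in_shuffle_sh u v w : in_shuffle u v w -> sh u v w.
Proof.
case=> ps [_ [-> [-> ->]]].
elim: ps => [|[p1 p2] ps IH] /=; first exact: sh_nil.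
rewrite -!catA; exact: sh_app.
Qed.

Lemma sh_cons x y c s : sh x y (c :: s) ->
  (exists x', x = c :: x' /\ sh x' y s) \/ (exists y', y = c :: y' /\ sh x y' s).
Proof.
move=> H; inversion H; subst; [left|right]; eauto.
Qed.

Lemma sh_nseq (a : T) n x y t : sh x y (nseq n a ++ t) ->
  exists i j x' y', i + j = n /\ x = nseq i a ++ x' /\ y = nseq j a ++ y' /\ sh x' y' t.
Proof.
elim: n x y => [|n IH] x y /=.
  by move=> H; exists 0, 0, x, y.
case/sh_cons => [[x' [-> H]]|[y' [-> H]]].
  have [i [j [x'' [y'' [E [-> [-> H']]]]]]] := IH _ _ H.
  by exists i.+1, j, x'', y''; rewrite addSn E.
have [i [j [x'' [y'' [E [-> [-> H']]]]]]] := IH _ _ H.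
by exists i, j.+1, x'', y''; rewrite addnS E.
Qed.

Lemma nseq_b_eq (a b : T) (hab : a != b) j k x y :
  nseq j a ++ b :: x = nseq k a ++ b :: y -> j = k /\ x = y.
Proof.
elim: j k => [|j IH] [|k] //=.
- by case.
- by case=> E; rewrite E eqxx in hab.
- by case=> E; rewrite E eqxx in hab.
- by case=> /IH [-> ->].
Qed.

End S.

Theorem lemma6 (T : eqType) (a b : T) (hab : a != b) (k l m : nat)
  (hkl : l < k) (hl : 1 <= l) (hm : 1 <= m) (u : seq T) :
  let w := nseq k a ++ [:: b] ++ nseq l a ++ nseq m b in
  L_eps [:: w] u ->
  (forall alpha : nat, is_prefix (nseq alpha a ++ [:: b]) u -> k <= alpha) /\
  (forall alpha : nat, is_prefix (nseq alpha a ++ [:: b; b]) u -> 2 * k <= alpha).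
Proof.
move=> w HL.
suff: (forall alpha s, u = nseq alpha a ++ b :: s -> k <= alpha) /\
      (forall alpha s, u = nseq alpha a ++ b :: b :: s -> 2 * k <= alpha).
  case=> H1 H2; split=> alpha [s Hs].
    by apply: (H1 _ s); rewrite Hs -catA.
  by apply: (H2 _ s); rewrite Hs -catA.
have Hw : forall j x, w = nseq j a ++ b :: x -> j = k /\ x = nseq l a ++ nseq m b.
  move=> j x E.
  rewrite /w /= in E.
  have [-> ->] := (@nseq_b_eq _ _ _ hab _ _ _ _ (esym E)).
  by [].
have {}HL := clos_rt_rtn1 _ _ _ _ HL.
elim: HL => [|v z Hs _ [IH1 IH2]].
  by split=> alpha s; case: alpha.
case: Hs => w0; rewrite inE => /eqP -> /in_shuffle_sh Hsh.
split.
- move=> alpha s E; rewrite E in Hsh.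
  have [i [j [x' [y' [Eij [Ex [Ey H]]]]]]] := @sh_nseq _ _ _ _ _ _ Hsh.
  case/sh_cons: H => [[x'' [Ex' _]]|[y'' [Ey' _]]].
    have := IH1 i x''; rewrite Ex Ex' => /(_ erefl) ?; lia.
  have [Ejk _] := Hw j y'' ltac:(by rewrite Ey Ey'); lia.
- move=> alpha s E; rewrite E in Hsh.
  have [i [j [x' [y' [Eij [Ex [Ey H]]]]]]] := @sh_nseq _ _ _ _ _ _ Hsh.
  case/sh_cons: H => [[x'' [Ex' H]]|[y'' [Ey' H]]].
    case/sh_cons: H => [[x3 [Ex'' _]]|[y3 [Ey'' _]]].
      have := IH2 i x3; rewrite Ex Ex' Ex'' => /(_ erefl) ?; lia.
    have [Ejk _] := Hw j y3 ltac:(by rewrite Ey Ey'').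
    have := IH1 i x''; rewrite Ex Ex' => /(_ erefl) ?; lia.
  case/sh_cons: H => [[x3 [Ex'' _]]|[y3 [Ey'' _]]].
    have [Ejk _] := Hw j y'' ltac:(by rewrite Ey Ey').
    have := IH1 i x3; rewrite Ex Ex'' => /(_ erefl) ?; lia.
  have [_ E2] := Hw j y'' ltac:(by rewrite Ey Ey').
  rewrite Ey'' in E2; move: hl E2; case: (l) => [|l'] //= _ [] E3.
  by rewrite E3 eqxx in hab.
Qed.
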